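(* Let $Q=ABCD$ be a non-degenerate trapezoid of perimeter $2$, i.e. a convex quadrangle with $AB\parallel CD$, and let $Q^\circ=KLMN$ be its dual. Then $KL\parallel MN$; in particular $Q^\circ$ is a trapezoid.
   Context: Identify $\mathbb{R}^2$ with $\mathbb{C}$. A quadrangle $Q=ABCD$ is an ordered 4-tuple of points $A,B,C,D\in\mathbb{C}$: $A$ is the first vertex and the order $A\to B\to C\to D\to A$ is the direction of traversal. Its edge vectors are $z_1=B-A$, $z_2=C-B$, $z_3=D-C$, $z_4=A-D$, so $z_1+z_2+z_3+z_4=0$; its perimeter is $|z_1|+|z_2|+|z_3|+|z_4|$. $Q$ is non-degenerate if each pair of consecutive edge vectors $(z_1,z_2),(z_2,z_3),(z_3,z_4),(z_4,z_1)$ consists of nonzero, non-collinear vectors. A non-degenerate quadrangle is convex if no two opposite edges intersect and all its interior angles are less than $\pi$. Associated plane: for a non-degenerate $Q$ of perimeter $2$, choose $u_1,\dots,u_4\in\mathbb{C}$ with $u_k^2=z_k$, where $u_1$ is an arbitrary square root of $z_1$ and for $k=1,2,3$ the sign of $u_{k+1}$ is chosen so that $\operatorname{Im}(\overline{u_k}u_{k+1})$ has the same sign as $\operatorname{Im}(\overline{z_k}z_{k+1})$. Write $u_k=a_k+i b_k$ and $\bar a=(a_1,a_2,a_3,a_4)$, $\bar b=(b_1,b_2,b_3,b_4)$; these are orthonormal in $\mathbb{R}^4$. Let $\Pi=\operatorname{span}(\bar a,\bar b)$ and $\Pi^\perp$ its orthogonal complement. Dual quadrangle: choose an orthonormal basis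 $(\bar c,\bar d)$ of $\Pi^\perp$, put $w_k=(c_k+i d_k)^2$; then $\sum_k w_k=0$ and $\sum_k|w_k|=2$. The dual quadrangle $Q^\circ=KLMN$ is the quadrangle with $L-K=w_1$, $M-L=w_2$, $N-M=w_3$, $K-N=w_4$. It is determined up to rotation, reflection and translation. *)

(* Defs.v *)
From Stdlib Require Import Reals.
Open Scope R_scope.

(* Complex numbers as pairs (Re, Im). *)
Definition pt : Type := (R * R)%type.
Definition csub (z w : pt) : pt := (fst z - fst w, snd z - snd w).
Definition cadd (z w : pt) : pt := (fst z + fst w, snd z + snd w).
Definition cscale (s : R) (z : pt) : pt := (s * fst z, s * snd z).
Definition cmul (z w : pt) : pt :=
  (fst z * fst w - snd z * snd w, fst z * snd w + snd z * fst w).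
Definition csq (z : pt) : pt := cmul z z.
Definition cabs (z : pt) : R := sqrt (fst z ^ 2 + snd z ^ 2).
(* cross z w = Im (conj z * w) *)
Definition cross (z w : pt) : R := fst z * snd w - snd z * fst w.

Definition e1 (A B C D : pt) : pt := csub B A.
Definition e2 (A B C D : pt) : pt := csub C B.
Definition e3 (A B C D : pt) : pt := csub D C.
Definition e4 (A B C D : pt) : pt := csub A D.

Definition perimeter (A B C D : pt) : R :=
  cabs (e1 A B C D) + cabs (e2 A B C D) + cabs (e3 A B C D) + cabs (e4 A B C D).

Definition noncollinear (z w : pt) : Prop :=
  z <> (0, 0) /\ w <> (0, 0) /\ cross z w <> 0.

Definition nondegenerate (A B C D : pt) : Prop :=
  noncollinear (e1 A B C D) (e2 A B C D) /\
  noncollinear (e2 A B C D) (e3 A B C D) /\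
  noncollinear (e3 A B C D) (e4 A B C D) /\
  noncollinear (e4 A B C D) (e1 A B C D).

Definition segments_meet (P Q R' S : pt) : Prop :=
  exists s t : R, 0 <= s <= 1 /\ 0 <= t <= 1 /\
    cadd P (cscale s (csub Q P)) = cadd R' (cscale t (csub S R')).

(* All interior angles < pi: all turns (cross products of consecutive edges)
   have the same strict sign. *)
Definition angles_lt_pi (A B C D : pt) : Prop :=
  (0 < cross (e1 A B C D) (e2 A B C D) /\ 0 < cross (e2 A B C D) (e3 A B C D) /\
   0 < cross (e3 A B C D) (e4 A B C D) /\ 0 < cross (e4 A B C D) (e1 A B C D)) \/
  (cross (e1 A B C D) (e2 A B C D) < 0 /\ cross (e2 A B C D) (e3 A B C D) < 0 /\
   cross (e3 A B C D) (e4 A B C D) < 0 /\ cross (e4 A B C D) (e1 A B C D) < 0).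

Definition convex (A B C D : pt) : Prop :=
  nondegenerate A B C D /\
  ~ segments_meet A B C D /\ ~ segments_meet B C D A /\
  angles_lt_pi A B C D.

Definition parallel (z w : pt) : Prop := cross z w = 0.

Definition same_sign (x y : R) : Prop := (0 < x /\ 0 < y) \/ (x < 0 /\ y < 0).

Definition admissible_roots (A B C D u1 u2 u3 u4 : pt) : Prop :=
  csq u1 = e1 A B C D /\ csq u2 = e2 A B C D /\
  csq u3 = e3 A B C D /\ csq u4 = e4 A B C D /\
  same_sign (cross u1 u2) (cross (e1 A B C D) (e2 A B C D)) /\
  same_sign (cross u2 u3) (cross (e2 A B C D) (e3 A B C D)) /\
  same_sign (cross u3 u4) (cross (e3 A B C D) (e4 A B C D)).

Definition dot4 (x y : R * R * R * R) : R :=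
  let '(x1, x2, x3, x4) := x in let '(y1, y2, y3, y4) := y in
  x1 * y1 + x2 * y2 + x3 * y3 + x4 * y4.

Definition re4 (u1 u2 u3 u4 : pt) : R * R * R * R := (fst u1, fst u2, fst u3, fst u4).
Definition im4 (u1 u2 u3 u4 : pt) : R * R * R * R := (snd u1, snd u2, snd u3, snd u4).

(* (c, d) is an orthonormal basis of the orthogonal complement of span(a, b)
   in R^4 (which is 2-dimensional since a, b are orthonormal). *)
Definition onb_perp (a b c d : R * R * R * R) : Prop :=
  dot4 c c = 1 /\ dot4 d d = 1 /\ dot4 c d = 0 /\
  dot4 c a = 0 /\ dot4 c b = 0 /\ dot4 d a = 0 /\ dot4 d b = 0.

(* Edge vectors w_k = (c_k + i d_k)^2 of the dual quadrangle KLMN. *)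
Definition dual_edge1 (c d : R * R * R * R) : pt :=
  let '(c1, _, _, _) := c in let '(d1, _, _, _) := d in csq (c1, d1).
Definition dual_edge2 (c d : R * R * R * R) : pt :=
  let '(_, c2, _, _) := c in let '(_, d2, _, _) := d in csq (c2, d2).
Definition dual_edge3 (c d : R * R * R * R) : pt :=
  let '(_, _, c3, _) := c in let '(_, _, d3, _) := d in csq (c3, d3).
Definition dual_edge4 (c d : R * R * R * R) : pt :=
  let '(_, _, _, c4) := c in let '(_, _, _, d4) := d in csq (c4, d4).

(* Main.v *)
Require Import Defs.
From Stdlib Require Import Reals Lra Psatz.
Open Scope R_scope.
Lemma sos_ident (a1 a2 a3 a4 b1 b2 b3 b4 c1 c2 c3 c4 d1 d2 d3 d4 : R) :
  ((a1*a1 + b1*b1 + c1*c1 + d1*d1) - 1)^2 + ((a1*a2 + b1*b2 + c1*c2 + d1*d2) - 0)^2 + ((a1*a3 + b1*b3 + c1*c3 + d1*d3) - 0)^2 + ((a1*a4 + b1*b4 + c1*c4 + d1*d4) - 0)^2 + ((a2*a1 + b2*b1 + c2*c1 + d2*d1) - 0)^2 + ((a2*a2 + b2*b2 + c2*c2 + d2*d2) - 1)^2 + ((a2*a3 + b2*b3 + c2*c3 + d2*d3) - 0)^2 + ((a2*a4 + b2*b4 + c2*c4 + d2*d4) - 0)^2 + ((a3*a1 + b3*b1 + c3*c1 + d3*d1) - 0)^2 + ((a3*a2 + b3*b2 + c3*c2 + d3*d2) - 0)^2 + ((a3*a3 + b3*b3 + c3*c3 + d3*d3) - 1)^2 + ((a3*a4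 + b3*b4 + c3*c4 + d3*d4) - 0)^2 + ((a4*a1 + b4*b1 + c4*c1 + d4*d1) - 0)^2 + ((a4*a2 + b4*b2 + c4*c2 + d4*d2) - 0)^2 + ((a4*a3 + b4*b3 + c4*c3 + d4*d3) - 0)^2 + ((a4*a4 + b4*b4 + c4*c4 + d4*d4) - 1)^2 =
  ((a1*a1 + a2*a2 + a3*a3 + a4*a4) - 1)^2 + ((b1*b1 + b2*b2 + b3*b3 + b4*b4) - 1)^2 + ((c1*c1 + c2*c2 + c3*c3 + c4*c4) - 1)^2 + ((d1*d1 + d2*d2 + d3*d3 + d4*d4) - 1)^2 + 2*((a1*b1 + a2*b2 + a3*b3 + a4*b4)^2 + (c1*a1 + c2*a2 + c3*a3 + c4*a4)^2 + (c1*b1 + c2*b2 + c3*b3 + c4*b4)^2 + (d1*a1 + d2*a2 + d3*a3 + d4*a4)^2 + (d1*b1 + d2*b2 + d3*b3 + d4*b4)^2 + (c1*d1 + c2*d2 + c3*d3 + c4*d4)^2).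
Proof. ring. Qed.

Lemma col13 (a1 a2 a3 a4 b1 b2 b3 b4 c1 c2 c3 c4 d1 d2 d3 d4 : R) :
  (a1*a1 + a2*a2 + a3*a3 + a4*a4) = 1 -> (b1*b1 + b2*b2 + b3*b3 + b4*b4) = 1 -> (a1*b1 + a2*b2 + a3*b3 + a4*b4) = 0 ->
  (c1*c1 + c2*c2 + c3*c3 + c4*c4) = 1 -> (d1*d1 + d2*d2 + d3*d3 + d4*d4) = 1 -> (c1*d1 + c2*d2 + c3*d3 + c4*d4) = 0 ->
  (c1*a1 + c2*a2 + c3*a3 + c4*a4) = 0 -> (c1*b1 + c2*b2 + c3*b3 + c4*b4) = 0 -> (d1*a1 + d2*a2 + d3*a3 + d4*a4) = 0 -> (d1*b1 + d2*b2 + d3*b3 + d4*b4) = 0 ->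
  (a1*a3 + b1*b3 + c1*c3 + d1*d3) = 0.
Proof.
  intros Haa Hbb Hab Hcc Hdd Hcd Hca Hcb Hda Hdb.
  pose proof (sos_ident a1 a2 a3 a4 b1 b2 b3 b4 c1 c2 c3 c4 d1 d2 d3 d4) as E.
  rewrite Haa, Hbb, Hab, Hcc, Hdd, Hcd, Hca, Hcb, Hda, Hdb in E.
  assert (S : ((a1*a3 + b1*b3 + c1*c3 + d1*d3) - 0)^2 <= 0).
  {     pose proof (pow2_ge_0 ((a1*a1 + b1*b1 + c1*c1 + d1*d1) - 1)) as P11.
    pose proof (pow2_ge_0 ((a1*a2 + b1*b2 + c1*c2 + d1*d2) - 0)) as P12.
    pose proof (pow2_ge_0 ((a1*a3 + b1*b3 + c1*c3 + d1*d3) - 0)) as P13.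
    pose proof (pow2_ge_0 ((a1*a4 + b1*b4 + c1*c4 + d1*d4) - 0)) as P14.
    pose proof (pow2_ge_0 ((a2*a1 + b2*b1 + c2*c1 + d2*d1) - 0)) as P21.
    pose proof (pow2_ge_0 ((a2*a2 + b2*b2 + c2*c2 + d2*d2) - 1)) as P22.
    pose proof (pow2_ge_0 ((a2*a3 + b2*b3 + c2*c3 + d2*d3) - 0)) as P23.
    pose proof (pow2_ge_0 ((a2*a4 + b2*b4 + c2*c4 + d2*d4) - 0)) as P24.
    pose proof (pow2_ge_0 ((a3*a1 + b3*b1 + c3*c1 + d3*d1) - 0)) as P31.
    pose proof (pow2_ge_0 ((a3*a2 + b3*b2 + c3*c2 + d3*d2) - 0)) as P32.
    pose proof (pow2_ge_0 ((a3*a3 + b3*b3 + c3*c3 + d3*d3) - 1)) as P33.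
    pose proof (pow2_ge_0 ((a3*a4 + b3*b4 + c3*c4 + d3*d4) - 0)) as P34.
    pose proof (pow2_ge_0 ((a4*a1 + b4*b1 + c4*c1 + d4*d1) - 0)) as P41.
    pose proof (pow2_ge_0 ((a4*a2 + b4*b2 + c4*c2 + d4*d2) - 0)) as P42.
    pose proof (pow2_ge_0 ((a4*a3 + b4*b3 + c4*c3 + d4*d3) - 0)) as P43.
    pose proof (pow2_ge_0 ((a4*a4 + b4*b4 + c4*c4 + d4*d4) - 1)) as P44.
    lra. }
  nra.
Qed.


Lemma cabs_csq (u : pt) : cabs (csq u) = fst u ^ 2 + snd u ^ 2.
Proof.
  destruct u as [a b]; unfold cabs, csq, cmul, fst, snd.
  replace ((a * a - b * b) ^ 2 + (a * b + b * a) ^ 2) with ((a ^ 2 + b ^ 2) ^ 2) by ring.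
  apply sqrt_pow2. nra.
Qed.

Lemma esum (A B C D : pt) :
  fst (e1 A B C D) + fst (e2 A B C D) + fst (e3 A B C D) + fst (e4 A B C D) = 0 /\
  snd (e1 A B C D) + snd (e2 A B C D) + snd (e3 A B C D) + snd (e4 A B C D) = 0.
Proof. unfold e1, e2, e3, e4, csub; simpl; split; ring. Qed.

Lemma cross_sq (a1 b1 a3 b3 : R) :
  cross (csq (a1, b1)) (csq (a3, b3)) = 2 * (a1 * a3 + b1 * b3) * (a1 * b3 - b1 * a3).
Proof. unfold cross, csq, cmul; simpl; ring. Qed.

Lemma par_case (a1 b1 a3 b3 p q : R) : a1 * b3 - b1 * a3 = 0 ->
  (a1^2 + b1^2) * cross (p, q) (csq (a3, b3)) = - (a3^2 + b3^2) * cross (csq (a1, b1)) (p, q).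
Proof.
  intro H. unfold cross, csq, cmul; simpl.
  match goal with |- ?L = ?R => assert (E : L - R = (a1 * b3 - b1 * a3) * (p * 2 * (a1*a3 - b1*b3) + q * 2 * (b1*a3 + a1*b3))) by ring end.
  rewrite H in E. lra.
Qed.

Theorem theorem8p1 (A B C D u1 u2 u3 u4 : pt) (c d : R * R * R * R) :
  convex A B C D ->
  perimeter A B C D = 2 ->
  parallel (e1 A B C D) (e3 A B C D) ->
  admissible_roots A B C D u1 u2 u3 u4 ->
  onb_perp (re4 u1 u2 u3 u4) (im4 u1 u2 u3 u4) c d ->
  parallel (dual_edge1 c d) (dual_edge3 c d).
Proof.
  intros [_ [_ [_ Hang]]] Hper Hpar [H1 [H2 [H3 [H4 _]]]] Honb.
  pose proof (esum A B C D) as [Sx Sy].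
  unfold perimeter in Hper. unfold parallel in Hpar. unfold angles_lt_pi in Hang.
  rewrite <- H1, <- H2, <- H3, <- H4 in Sx, Sy, Hper, Hang. rewrite <- H1, <- H3 in Hpar.
  rewrite !cabs_csq in Hper.
  destruct u1 as [a1 b1], u2 as [a2 b2], u3 as [a3 b3], u4 as [a4 b4].
  destruct c as [[[c1 c2] c3] c4], d as [[[d1 d2] d3] d4].
  unfold onb_perp, re4, im4, dot4 in Honb; simpl in Honb, Hper, Sx, Sy.
  destruct Honb as [Hcc [Hdd [Hcd [Hca [Hcb [Hda Hdb]]]]]].
  unfold csq, cmul in Sx, Sy; simpl in Sx, Sy.
  assert (Haa : a1*a1 + a2*a2 + a3*a3 + a4*a4 = 1) by nra.
  assert (Hbb : b1*b1 + b2*b2 + b3*b3 + b4*b4 = 1) by nra.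
  assert (Hab : a1*b1 + a2*b2 + a3*b3 + a4*b4 = 0) by nra.
  assert (Hcol := col13 a1 a2 a3 a4 b1 b2 b3 b4 c1 c2 c3 c4 d1 d2 d3 d4
                   Haa Hbb Hab Hcc Hdd Hcd Hca Hcb Hda Hdb).
  assert (Hu : a1 * a3 + b1 * b3 = 0).
  { rewrite cross_sq in Hpar.
    destruct (Rmult_integral _ _ Hpar) as [Z|Z].
    - destruct (Rmult_integral _ _ Z) as [Z'|Z']; [lra | exact Z'].
    - exfalso.
      pose proof (par_case a1 b1 a3 b3 (fst (csq (a2, b2))) (snd (csq (a2, b2))) Z) as P.
      rewrite <- surjective_pairing in P.
      set (X := cross (csq (a2, b2)) (csq (a3, b3))) in *.
      set (Y := cross (csq (a1, b1)) (csq (a2, b2))) in *.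
      assert (HXY : 0 < X * Y) by (destruct Hang as [[? [? _]]|[? [? _]]]; nra).
      assert (Hz : a1 ^ 2 + b1 ^ 2 = 0) by nra.
      assert (a1 = 0) by nra. assert (b1 = 0) by nra. subst a1 b1.
      assert (Y = 0) by (unfold Y, cross, csq, cmul; simpl; ring). nra. }
  unfold dual_edge1, dual_edge3, parallel.
  rewrite cross_sq.
  replace (c1 * c3 + d1 * d3) with 0 by lra. ring.
Qed.
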